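(* For every hypothesis class $\mathcal{H}$ and every integer $t\ge0$, $\mathcal{S}(\mathcal{H},t)\le\mathcal{N}(0,\mathcal{H},t)$.
   Context: Hypotheses are maps $\mathcal{X}\to\{-1,+1\}$. A depth-$t$ $Z$-valued tree $\mathbf{z}$ is a sequence of maps $\mathbf{z}_s:\{\pm1\}^{s-1}\to Z$, $s=1,\dots,t$; write $\mathbf{z}_s(\epsilon)=\mathbf{z}_s(\epsilon_1,\dots,\epsilon_{s-1})$ for $\epsilon\in\{\pm1\}^t$. For a depth-$t$ $\mathcal{X}$-valued tree $\mathbf{x}$, $S(\mathcal{H},\mathbf{x})=\{\epsilon\in\{\pm1\}^t:\exists h\in\mathcal{H},\ \epsilon_s=h(\mathbf{x}_s(\epsilon))\ \forall s\le t\}$; the tree shattering coefficient is $\mathcal{S}(\mathcal{H},t)=\max_{\mathbf{x}}|S(\mathcal{H},\mathbf{x})|$ for $t\ge1$, and $\mathcal{S}(\mathcal{H},0)=1$ if $\mathcal{H}\neq\emptyset$, $0$ otherwise. A set $V$ of depth-$t$ $\{\pm1\}$-valued trees is a sequential zero cover of $\mathcal{H}$ on $\mathbf{x}$ if for all $h\in\mathcal{H}$ and all $\epsilon\in\{\pm1\}^t$ there is $\mathbf{v}\in V$ with $\mathbf{v}_s(\epsilon)=h(\mathbf{x}_s(\epsilon))$ for $s=1,\dots,t$. $\mathcal{N}(0,\mathcal{H},\mathbf{x})$ is the minimum size of such a cover, and $\mathcal{N}(0,\mathcal{H},t)=\max_{\mathbf{x}}\mathcal{N}(0,\mathcal{H},\mathbf{x})$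 over depth-$t$ $\mathcal{X}$-valued trees. *)

(* Defs.v *)
From Stdlib Require Import ClassicalEpsilon.
From Stdlib Require List.
From mathcomp Require Import all_boot.
Set Implicit Arguments. Unset Strict Implicit. Unset Printing Implicit Defensive.

(* Signs {-1,+1} are encoded as bool (true = +1, false = -1). *)

Definition decP (P : Prop) : bool :=
  if excluded_middle_informative P then true else false.

(* Maximum of a set of naturals (0 if it has no maximum, e.g. if empty). *)
Definition natmax (P : nat -> Prop) : nat :=
  match excluded_middle_informative
          (exists m, P m /\ forall k, P k -> k <= m) with
  | left pf => proj1_sig (constructive_indefinite_description _ pf)
  | right _ => 0
  end.

(* Minimum of a set of naturals (0 if empty). *)
Definition natmin (P : nat -> Prop) : nat :=
  match excluded_middle_informative
          (exists m, P m /\ forall k, P k -> m <= k) with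
  | left pf => proj1_sig (constructive_indefinite_description _ pf)
  | right _ => 0
  end.

(* A depth-t Z-valued tree: z_s : {±1}^(s-1) -> Z for s = 1..t.
   Index s : 'I_t is 0-based (s stands for s+1 in the paper), and the map
   receives the prefix (eps_1,...,eps_s) as a sequence; only its values on
   sequences of length s matter. *)
Definition tree (Z : Type) (t : nat) := 'I_t -> seq bool -> Z.

Definition tapp (Z : Type) (t : nat) (z : tree Z t) (s : 'I_t)
  (e : t.-tuple bool) : Z := z s (take s e).

Definition in_S (X : Type) (H : (X -> bool) -> Prop) (t : nat)
  (x : tree X t) (e : t.-tuple bool) : Prop :=
  exists h, H h /\ forall s : 'I_t, tnth e s = h (tapp x s e).

Definition S_tree (X : Type) (H : (X -> bool) -> Prop) (t : nat)
  (x : tree X t) : nat :=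
  #|[set e : t.-tuple bool | decP (in_S H x e)]|.

Definition shatter_coeff (X : Type) (H : (X -> bool) -> Prop) (t : nat) : nat :=
  if t == 0 then (if decP (exists h, H h) then 1 else 0)
  else natmax (fun n => exists x : tree X t, n = S_tree H x).

Definition zero_cover (X : Type) (H : (X -> bool) -> Prop) (t : nat)
  (x : tree X t) (V : seq (tree bool t)) : Prop :=
  forall h, H h -> forall e : t.-tuple bool,
    exists v, List.In v V /\ forall s : 'I_t, tapp v s e = h (tapp x s e).

Definition N0_tree (X : Type) (H : (X -> bool) -> Prop) (t : nat)
  (x : tree X t) : nat :=
  natmin (fun n => exists V, zero_cover H x V /\ size V = n).

Definition N0 (X : Type) (H : (X -> bool) -> Prop) (t : nat) : nat :=
  natmax (fun n => exists x : tree X t, n = N0_tree H x).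

(* Main.v *)
Require Import Defs.
From mathcomp Require Import all_boot.
From Stdlib Require Import ClassicalEpsilon Classical.
From Stdlib Require List.
From mathcomp Require Import zify.
Set Implicit Arguments. Unset Strict Implicit.

Lemma decPP (P : Prop) : Defs.decP P = true <-> P.
Proof. rewrite /Defs.decP; case: excluded_middle_informative => //. Qed.

Lemma bounded_max (P : nat -> Prop) B :
  (exists k, P k) -> (forall k, P k -> k <= B) ->
  exists m, P m /\ forall k, P k -> k <= m.
Proof.
elim: B => [|B IH] [k Pk] Hb.
  exists k; split => // j Pj; have := Hb _ Pj; have := Hb _ Pk; lia.
case: (classic (P B.+1)) => HB.
  by exists B.+1; split.
apply: IH; first by exists k.
move=> j Pj; have := Hb _ Pj; rewrite leq_eqVlt; case/orP => // /eqP E.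
by subst j.
Qed.

Lemma natmax_spec (P : nat -> Prop) B :
  (exists k, P k) -> (forall k, P k -> k <= B) ->
  P (natmax P) /\ forall k, P k -> k <= natmax P.
Proof.
move=> ex bd; have := bounded_max ex bd => H.
rewrite /natmax; case: excluded_middle_informative => // pf.
by case: constructive_indefinite_description.
Qed.

Lemma natmax_empty (P : nat -> Prop) : ~ (exists k, P k) -> natmax P = 0.
Proof.
move=> ne; rewrite /natmax; case: excluded_middle_informative => // pf.
by exfalso; case: pf => m [Pm _]; apply: ne; exists m.
Qed.

Lemma natmin_spec (P : nat -> Prop) :
  (exists k, P k) -> P (natmin P) /\ forall k, P k -> natmin P <= k.
Proof.
move=> ex.
have ex' : exists n, (fun n => Defs.decP (P n)) n.
  by case: ex => k Pk; exists k; apply/decPP.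
have : exists m, P m /\ forall k, P k -> m <= k.
  case: (ex_minnP ex') => m /decPP Pm Hm; exists m; split => // k Pk.
  by apply: Hm; apply/decPP.
move=> H; rewrite /natmin; case: excluded_middle_informative => // pf.
by case: constructive_indefinite_description.
Qed.

Lemma In_map_seq (A B : Type) (f : A -> B) (l : seq A) a :
  List.In a l -> List.In (f a) (map f l).
Proof. elim: l => //= b l IH [->|H]; [left|right; apply: IH] => //. Qed.

Lemma In_of_mem (T : eqType) (l : seq T) a : a \in l -> List.In a l.
Proof.
elim: l => //= b l IH; rewrite in_cons; case/orP => [/eqP ->|H]; [left|right; apply: IH] => //.
Qed.

Lemma In_nth (A : Type) (d : A) (l : seq A) v :
  List.In v l -> exists i, i < size l /\ nth d l i = v.
Proof.
elim: l => //= b l IH [->|H]; first by exists 0.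
by case: (IH H) => i [Hi Hn]; exists i.+1.
Qed.

Section S.
Variables (X : Type) (H : (X -> bool) -> Prop).

Lemma cover_exists t (x : tree X t) :
  exists V, zero_cover H x V /\ size V = 2 ^ t.
Proof.
exists (map (fun e : t.-tuple bool => (fun (s : 'I_t) (_ : seq bool) => tnth e s))
          (enum {: t.-tuple bool})).
split; last by rewrite size_map -cardE card_tuple card_bool.
move=> h Hh e.
exists (fun (s : 'I_t) (_ : seq bool) => tnth [tuple h (tapp x s e) | s < t] s).
split; last by move=> s; rewrite /tapp tnth_mktuple.
apply: (In_map_seq (fun e : t.-tuple bool => (fun (s : 'I_t) (_ : seq bool) => tnth e s))).
by apply: In_of_mem; rewrite mem_enum.
Qed.

Lemma path_inj t (v : tree bool t) (e1 e2 : t.-tuple bool) :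
  (forall s : 'I_t, tapp v s e1 = tnth e1 s) ->
  (forall s : 'I_t, tapp v s e2 = tnth e2 s) -> e1 = e2.
Proof.
move=> H1 H2.
have key : forall k j, j < k -> j < t -> nth false e1 j = nth false e2 j.
  elim=> [//|k IH] j; rewrite ltnS leq_eqVlt; case/orP => [/eqP ->|Hj] Ht; last by apply: IH.
  have Htk : take k e1 = take k e2.
    apply: (@eq_from_nth _ false); first by rewrite !size_take !size_tuple.
    move=> i; rewrite size_take size_tuple => Hi.
    have Hik : i < k by move: Hi; rewrite Ht.
    by rewrite !nth_take //; apply: IH => //; lia.
  have := H1 (Ordinal Ht); have := H2 (Ordinal Ht).
  rewrite /tapp /= Htk => E2 E1; move: (tnth_nth false e1 (Ordinal Ht)) (tnth_nth false e2 (Ordinal Ht)) => /= <- <-.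
  by rewrite -E1 -E2.
apply: eq_from_tnth => s; rewrite !(tnth_nth false); apply: (key s.+1) => //.
Qed.

Lemma S_le_cover t (x : tree X t) V :
  zero_cover H x V -> S_tree H x <= size V.
Proof.
move=> cov.
pose d : tree bool t := fun _ _ => true.
pose Q (e : t.-tuple bool) i := i < size V /\ forall s : 'I_t, tapp (nth d V i) s e = tnth e s.
have exQ : forall e, in_S H x e -> exists i, Q e i.
  move=> e [h [Hh He]]; case: (cov h Hh e) => v [Hv Hvs].
  case: (In_nth d Hv) => i [Hi Hn]; exists i; split => // s.
  by rewrite Hn Hvs He.
pose f (e : t.-tuple bool) : nat :=
  match excluded_middle_informative (exists i, Q e i) with
  | left pf => proj1_sig (constructive_indefinite_description _ pf)
  | right _ => 0 end.
have fQ : forall e, in_S H x e -> Q e (f e).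
  move=> e He; rewrite /f; case: excluded_middle_informative => [pf|n].
    by case: constructive_indefinite_description.
  by exfalso; apply: n; apply: exQ.
rewrite /S_tree cardE.
set A := [set e : t.-tuple bool | Defs.decP (in_S H x e)].
have inA : forall e, e \in enum A -> in_S H x e.
  by move=> e; rewrite mem_enum inE => /decPP.
rewrite -(size_map f) -(size_iota 0 (size V)).
apply: uniq_leq_size.
  rewrite map_inj_in_uniq ?enum_uniq //.
  move=> e1 e2 He1 He2 Ef.
  have [_ Q1] := fQ _ (inA _ He1); have [_ Q2] := fQ _ (inA _ He2).
  rewrite Ef in Q1.
  exact: (path_inj Q1 Q2).
move=> i /mapP [e He ->]; rewrite mem_iota /=.
by case: (fQ _ (inA _ He)).
Qed.

Lemma N0_tree_spec t (x : tree X t) :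
  (exists V, zero_cover H x V /\ size V = N0_tree H x) /\ N0_tree H x <= 2 ^ t.
Proof.
have ex : exists k, (fun n => exists V, zero_cover H x V /\ size V = n) k.
  by case: (cover_exists x) => V [cv _]; exists (size V), V.
have [P1 P2] := natmin_spec ex.
split => //; case: (cover_exists x) => V [cv sV].
by rewrite -sV; apply: P2; exists V.
Qed.

Lemma N0_ge t (x : tree X t) : N0_tree H x <= N0 H t.
Proof.
have Hb : forall k, (fun n => exists x : tree X t, n = N0_tree H x) k -> k <= 2 ^ t.
  by move=> k [x' ->]; case: (N0_tree_spec x').
have [_ P2] := natmax_spec (ex_intro _ _ (ex_intro _ x erefl)) Hb.
by apply: P2; exists x.
Qed.

End S.

Theorem mainTheorem13 (X : Type) (H : (X -> bool) -> Prop) (t : nat) :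
  shatter_coeff H t <= N0 H t.
Proof.
rewrite /shatter_coeff.
case: (boolP (t == 0)) => [/eqP Ht|Ht].
  subst t.
  case: ifP => // /decPP [h Hh].
  have x : tree X 0 by case=> m; rewrite ltn0.
  apply: leq_trans (N0_ge H x).
  have [[V [cv sV]] _] := N0_tree_spec H x.
  rewrite -sV; case: (cv h Hh [tuple]) => v [Hv _].
  by case: V Hv {cv sV}.
case: (classic (exists x : tree X t, True)) => [[x _]|nx]; last first.
  rewrite natmax_empty //; by case=> k [x _]; apply: nx; exists x.
have Hb : forall k, (fun n => exists x : tree X t, n = S_tree H x) k -> k <= 2 ^ t.
  move=> k [x' ->]; have [[V [cv sV]] Hb] := N0_tree_spec H x'.
  by apply: leq_trans Hb; rewrite -sV; apply: S_le_cover cv.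
have [[x0 ->] _] := natmax_spec (ex_intro _ _ (ex_intro _ x erefl)) Hb.
apply: leq_trans (N0_ge H x0).
have [[V [cv sV]] _] := N0_tree_spec H x0.
by rewrite -sV; apply: S_le_cover cv.
Qed.
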